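(* For all $x,y\ge 1$ and $n>\max(x,y)$, the minimum possible number of edges in any task-dependency graph produced by the $(x,y)$ edge-removal process on $n$ vertices is $n-\min(x,y)$.
   Context: A task-dependency graph is a finite directed acyclic graph (no loops, no multiple edges). A vertex is initial if it has in-degree $0$ and terminal if it has out-degree $0$ (an isolated vertex is both). The $(x,y)$ edge-removal process on $n$ vertices: start with the task-dependency graph on $\{1,\dots,n\}$ having all edges $(a,b)$ with $a<b$. Edges are removed uniformly at random, one at a time; a removal that would cause more than $x$ initial vertices or more than $y$ terminal vertices is cancelled. The process terminates when no further edge can be removed; the produced graph is the final graph (over all possible runs). *)

(* Defs.v *)
From mathcomp Require Import all_boot all_order.
Set Implicit Arguments. Unset Strict Implicit. Unset Printing Implicit Defensive.

(* Vertices {1,...,n} are represented by 'I_n = {0,...,n-1} (order-preserving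
   relabelling).  A graph on these vertices is its set of directed edges (a,b). *)
Definition graph (n : nat) := {set 'I_n * 'I_n}.

Definition complete_dag (n : nat) : graph n := [set e : 'I_n * 'I_n | (e.1 < e.2)%N].

Definition initial_vertices n (E : graph n) : {set 'I_n} :=
  [set v | [forall u, (u, v) \notin E]].
Definition terminal_vertices n (E : graph n) : {set 'I_n} :=
  [set v | [forall w, (v, w) \notin E]].

Definition admissible (x y n : nat) (E : graph n) : bool :=
  (#|initial_vertices E| <= x) && (#|terminal_vertices E| <= y).

(* One (non-cancelled) step: remove an existing edge e, the result being admissible. *)
Definition removal_step (x y n : nat) (E E' : graph n) : Prop :=
  exists2 e, e \in E & E' = E :\ e /\ admissible x y E'.

Inductive reachable (x y n : nat) : graph n -> Prop :=
  | reach_start : reachable x y (complete_dag n)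
  | reach_step E E' : reachable x y E -> removal_step x y E E' -> reachable x y E'.

Definition final_graph (x y n : nat) (E : graph n) : Prop :=
  reachable x y E /\ forall E', ~ removal_step x y E E'.

(* Main.v *)
Require Import Defs.
From mathcomp Require Import all_boot all_order.
From mathcomp Require Import zify.
Set Implicit Arguments. Unset Strict Implicit. Unset Printing Implicit Defensive.

Lemma init_sub n (E F : graph n) : E \subset F ->
  initial_vertices F \subset initial_vertices E.
Proof.
move=> sEF; apply/subsetP=> v; rewrite !inE => /forallP H; apply/forallP=> u.
apply/negP=> uv; by move: (H u); rewrite (subsetP sEF _ uv).
Qed.

Lemma term_sub n (E F : graph n) : E \subset F ->
  terminal_vertices F \subset terminal_vertices E.
Proof.
move=> sEF; apply/subsetP=> v; rewrite !inE => /forallP H; apply/forallP=> u.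
apply/negP=> uv; by move: (H u); rewrite (subsetP sEF _ uv).
Qed.

Lemma adm_sub x y n (E F : graph n) : E \subset F -> admissible x y E -> admissible x y F.
Proof.
rewrite /admissible => sEF /andP[h1 h2]; apply/andP; split.
  by have := subset_leq_card (init_sub sEF); lia.
by have := subset_leq_card (term_sub sEF); lia.
Qed.

Lemma compl_init n (E : graph n) : ~: initial_vertices E \subset [set e.2 | e in E].
Proof.
apply/subsetP=> v; rewrite !inE => /forallPn [u]; rewrite negbK => uv.
by apply/imsetP; exists (u, v).
Qed.

Lemma compl_term n (E : graph n) : ~: terminal_vertices E \subset [set e.1 | e in E].
Proof.
apply/subsetP=> v; rewrite !inE => /forallPn [u]; rewrite negbK => uv.
by apply/imsetP; exists (v, u).
Qed.

Lemma card_ge_init n (E : graph n) : n - #|initial_vertices E| <= #|E|.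
Proof.
have := leq_trans (subset_leq_card (compl_init E)) (leq_imset_card _ _).
have := cardsC (initial_vertices E); rewrite card_ord => h1 h2.
move: h1 h2; move: #|initial_vertices E| #|~: initial_vertices E| #|E| => a b c; lia.
Qed.

Lemma card_ge_term n (E : graph n) : n - #|terminal_vertices E| <= #|E|.
Proof.
have := leq_trans (subset_leq_card (compl_term E)) (leq_imset_card _ _).
have := cardsC (terminal_vertices E); rewrite card_ord => h1 h2.
move: h1 h2; move: #|terminal_vertices E| #|~: terminal_vertices E| #|E| => a b c; lia.
Qed.

Definition Tm n m : graph n := [set e : 'I_n * 'I_n | (e.1 + m == e.2)%N].

Lemma Tm_init n m : (m <= n)%N -> #|initial_vertices (Tm n m)| = m.
Proof.
move=> mn.
have -> : initial_vertices (Tm n m) = [set widen_ord mn i | i in 'I_m].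
  apply/setP=> v; rewrite !inE; apply/forallP/imsetP.
    move=> H; case: (ltnP v m) => vm.
      by exists (Ordinal vm) => //; apply/val_inj.
    have um : (v - m < n)%N by have := ltn_ord v; lia.
    by exfalso; move: (H (Ordinal um)); rewrite inE /= subnK // eqxx.
  case=> i _ -> u; rewrite inE /=; have := ltn_ord i; lia.
by rewrite card_imset ?card_ord //; by move=> a b /(congr1 val) /= h; apply/val_inj.
Qed.

Lemma Tm_card n m : (m <= n)%N -> #|Tm n m| = n - m.
Proof.
move=> mn.
have e2 : [set e.2 | e in Tm n m] = ~: initial_vertices (Tm n m).
  apply/eqP; rewrite eqEsubset compl_init andbT; apply/subsetP=> v /imsetP [e].
  rewrite !inE => /eqP h ->; apply/forallPn; exists e.1; rewrite negbK inE.
  by rewrite -h.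
have := cardsC (initial_vertices (Tm n m)); rewrite card_ord Tm_init // -e2 card_in_imset.
  by move=> h; apply/eqP; rewrite -(eqn_add2l m) h subnKC.
move=> [a b] [c d]; rewrite !inE /= => /eqP h1 /eqP h2 h3; subst.
by congr pair; apply/val_inj => /=; lia.
Qed.

Lemma Tm_term n m : (m <= n)%N -> #|terminal_vertices (Tm n m)| = m.
Proof.
move=> mn.
have e1 : [set e.1 | e in Tm n m] = ~: terminal_vertices (Tm n m).
  apply/eqP; rewrite eqEsubset compl_term andbT; apply/subsetP=> v /imsetP [e].
  rewrite !inE => /eqP h ->; apply/forallPn; exists e.2; rewrite negbK inE.
  by rewrite -h.
have := cardsC (terminal_vertices (Tm n m)); rewrite card_ord -e1 card_in_imset.
  rewrite Tm_card //; lia.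
move=> [a b] [c d]; rewrite !inE /= => /eqP h1 /eqP h2 h3; subst.
by congr pair; apply/val_inj => /=; lia.
Qed.

Lemma Tm_rm n m e : (m <= n)%N -> e \in Tm n m ->
  (m < #|initial_vertices (Tm n m :\ e)|)%N /\ (m < #|terminal_vertices (Tm n m :\ e)|)%N.
Proof.
move=> mn eT; have sub : Tm n m :\ e \subset Tm n m by exact: subsetDl.
split.
- have s1 : e.2 |: initial_vertices (Tm n m) \subset initial_vertices (Tm n m :\ e).
    apply/subsetP=> v; rewrite in_setU1 => /orP [/eqP -> | hv]; last first.
      exact: (subsetP (init_sub sub)).
    rewrite inE; apply/forallP=> u; rewrite !inE negb_and negbK.
    clear sub; move: eT; case: e => a b; rewrite !inE /= => /eqP h'.
    by apply/orP; case: (eqVneq (u + m)%N b) => h; [left | right];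
       rewrite // xpair_eqE; apply/andP; split=> //; apply/eqP/ord_inj; lia.
  have := subset_leq_card s1; rewrite cardsU1 Tm_init //.
  have -> : e.2 \notin initial_vertices (Tm n m).
    rewrite inE negb_forall; apply/existsP; exists e.1; rewrite negbK.
    by rewrite -surjective_pairing.
  done.
- have s1 : e.1 |: terminal_vertices (Tm n m) \subset terminal_vertices (Tm n m :\ e).
    apply/subsetP=> v; rewrite in_setU1 => /orP [/eqP -> | hv]; last first.
      exact: (subsetP (term_sub sub)).
    rewrite inE; apply/forallP=> u; rewrite !inE negb_and negbK.
    clear sub; move: eT; case: e => a b; rewrite !inE /= => /eqP h'.
    by apply/orP; case: (eqVneq (a + m)%N u) => h; [left | right];
       rewrite // xpair_eqE; apply/andP; split=> //; apply/eqP/ord_inj; lia.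
  have := subset_leq_card s1; rewrite cardsU1 Tm_term //.
  have -> : e.1 \notin terminal_vertices (Tm n m).
    rewrite inE negb_forall; apply/existsP; exists e.2; rewrite negbK.
    by rewrite -surjective_pairing.
  done.
Qed.

Lemma reach_all x y n (T : graph n) : admissible x y T ->
  forall k (S : graph n), T \subset S -> S \subset complete_dag n ->
  (#|complete_dag n :\: S| <= k)%N -> reachable x y S.
Proof.
move=> aT k; elim: k => [|k IH] S sTS sSC hk.
  have -> : S = complete_dag n.
    apply/eqP; rewrite eqEsubset sSC /= -setD_eq0 -cards_eq0.
    by move: hk; rewrite leqn0.
  exact: reach_start.
case: (boolP (complete_dag n \subset S)) => hC.
  have -> : S = complete_dag n by apply/eqP; rewrite eqEsubset sSC hC.
  exact: reach_start.
case/subsetPn: hC => e eC eS.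
have r' : reachable x y (e |: S).
  apply: IH.
  - exact: subset_trans sTS (subsetUr _ _).
  - by rewrite subUset sub1set eC.
  - have := cardsD1 e (complete_dag n :\: S); rewrite in_setD eC eS /= setDDl.
    rewrite [S :|: _]setUC => h; move: hk; rewrite h; lia.
apply: reach_step r' _; exists e; first by rewrite setU11.
split; first by rewrite setU1K.
exact: adm_sub sTS aT.
Qed.

Lemma Tm_sub n m : (1 <= m)%N -> Tm n m \subset complete_dag n.
Proof. by move=> m1; apply/subsetP=> e; rewrite !inE => /eqP <-; lia. Qed.

Theorem mainTheorem6 (x y n : nat) :
  1 <= x -> 1 <= y -> maxn x y < n ->
  (exists E : graph n, final_graph x y E /\ #|E| = n - minn x y) /\
  (forall E : graph n, final_graph x y E -> n - minn x y <= #|E|).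
Proof.
move=> x1 y1 mxn.
set m := minn x y.
have m1 : (1 <= m)%N by rewrite /m; lia.
have mn : (m <= n)%N by rewrite /m; lia.
have aT : admissible x y (Tm n m).
  by rewrite /admissible Tm_init // Tm_term // /m; apply/andP; split; lia.
have reachT : forall S : graph n, Tm n m \subset S -> S \subset complete_dag n ->
    reachable x y S.
  by move=> S h1 h2; exact: (reach_all aT h1 h2 (leqnn _)).
have admR : forall E : graph n, reachable x y E -> admissible x y E.
  move=> E; elim=> [|E1 E2 _ _ [e _ [_ h]]] //.
  exact: adm_sub (Tm_sub n m1) aT.
split.
  exists (Tm n m); split; last exact: Tm_card.
  split; first exact: reachT (subxx _) (Tm_sub n m1).
  move=> E' [e eT [-> /andP [h1 h2]]].
  have [h3 h4] := Tm_rm mn eT.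
  move: h1 h2 h3 h4; rewrite /m.
  move: #|initial_vertices (Tm n (minn x y) :\ e)| #|terminal_vertices (Tm n (minn x y) :\ e)| => a b.
  lia.
move=> E [/admR /andP [h1 h2] _].
have := card_ge_init E; have := card_ge_term E; move: h1 h2; rewrite /m.
move: #|initial_vertices E| #|terminal_vertices E| #|E| => a b c; lia.
Qed.
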